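(* Let $I=[s,t]\subseteq\mathbb R/\mathbb Z$ be an $R$-interval, and let $(c_1,c_2)$ be either (blue, red) or (red, blue). Then there exist points $x_1,x_2$ with $s<x_1<x_2<t$ (in the cyclic order of $I$) such that $[s,x_1],[x_1,x_2],[x_2,t]$ are $R$-intervals, $x_1$ has color $c_1$ and $x_2$ has color $c_2$.
   Context: Let $\sigma_3(t)=3t$ on $\mathbb R/\mathbb Z$. An interval $I=[s,t]\subseteq\mathbb R/\mathbb Z$ is an $R$-interval if there is $n\ge0$ such that $\sigma_3^n$ maps $(s,t)$ homeomorphically onto $(0,1)$, $(0,\frac23)$ or $(\frac13,1)$. Colors of $3$-adic rationals: a point $p/3^n$ with $n\ge1$, $0<p<3^n$, $3\nmid p$ is red if $p\equiv1\pmod 3$ and blue if $p\equiv2\pmod3$; the point $0$ is blue. *)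

(* Defs.v *)
From Stdlib Require Import Reals ZArith.
Open Scope R_scope.

(* The circle R/Z: a point is represented by any real lift.
   sigma3^n on R/Z is x |-> 3^n x mod 1; we use the representative in [0,1). *)
Definition sigma3_iter (n : nat) (x : R) : R := frac_part (3 ^ n * x).

(* The three target arcs (0,1), (0,2/3), (1/3,1) of R/Z, as (a,b) with
   the arc being {y in [0,1) | a < y < b}. *)
Definition target_arc (a b : R) : Prop :=
  (a = 0 /\ b = 1) \/ (a = 0 /\ b = 2/3) \/ (a = 1/3 /\ b = 1).

(* An arc [s,t] of R/Z (counterclockwise from s to t) is represented by real
   lifts s < t <= s + 1; t = s + 1 is the full circle.  The open arc (s,t)
   is the projection of the real open interval (s,t), which is injective
   on it.  [s,t] is an R-interval iff for some n, sigma3^n maps (s,t)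
   bijectively (equivalently, homeomorphically, since it is continuous and
   both sides are open arcs) onto one of the target arcs. *)
Definition Rinterval (s t : R) : Prop :=
  s < t <= s + 1 /\
  exists (n : nat) (a b : R), target_arc a b /\
    (forall x, s < x < t -> a < sigma3_iter n x < b) /\
    (forall x y, s < x < t -> s < y < t ->
        sigma3_iter n x = sigma3_iter n y -> x = y) /\
    (forall y, a < y < b -> exists x, s < x < t /\ sigma3_iter n x = y).

Inductive color := Red | Blue.

Definition triadic_with_residue (r : Z) (x : R) : Prop :=
  exists (n : nat) (p k : Z),
    (1 <= n)%nat /\ (0 < p < 3 ^ Z.of_nat n)%Z /\ ~ (3 | p)%Z /\
    (p mod 3 = r)%Z /\ x = IZR p / 3 ^ n + IZR k.

Definition has_color (c : color) (x : R) : Prop :=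
  match c with
  | Red => triadic_with_residue 1 x
  | Blue => (exists k : Z, x = IZR k) \/ triadic_with_residue 2 x
  end.

(* Main.v *)
Require Import Defs.
From Stdlib Require Import Reals ZArith.
From Stdlib Require Import Lra Lia.
Open Scope R_scope.


Lemma frac_eq (K : Z) (w : R) : IZR K <= w < IZR K + 1 -> frac_part w = w - IZR K.
Proof.
  intros [H1 H2]. unfold frac_part, Int_part.
  assert (E : (K + 1)%Z = up w) by (apply tech_up; rewrite plus_IZR; lra).
  rewrite <- E. replace (K + 1 - 1)%Z with K by lia. reflexivity.
Qed.

Lemma pow3_pos (n : nat) : 0 < 3 ^ n.
Proof. apply pow_lt; lra. Qed.

Lemma RI (m : nat) (k : Z) (a b : R) : target_arc a b ->
  Rinterval ((IZR k + a) / 3 ^ m) ((IZR k + b) / 3 ^ m).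
Proof.
  intros Ht. pose proof (pow3_pos m) as P.
  assert (Hab : 0 <= a /\ a < b /\ b <= 1) by (destruct Ht as [[-> ->]|[[-> ->]|[-> ->]]]; lra).
  assert (F : forall x, (IZR k + a) / 3 ^ m < x < (IZR k + b) / 3 ^ m ->
     sigma3_iter m x = 3 ^ m * x - IZR k /\ IZR k + a < 3^m * x < IZR k + b).
  { intros x [h1 h2].
    apply Rmult_lt_compat_l with (r := 3^m) in h1; [|lra].
    apply Rmult_lt_compat_l with (r := 3^m) in h2; [|lra].
    unfold Rdiv in h1, h2. rewrite (Rmult_comm (IZR k + a)), <- Rmult_assoc, Rinv_r, Rmult_1_l in h1 by lra.
    rewrite (Rmult_comm (IZR k + b)), <- Rmult_assoc, Rinv_r, Rmult_1_l in h2 by lra.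
    split; [|lra]. unfold sigma3_iter. apply frac_eq. lra. }
  split.
  - split.
    + apply Rmult_lt_compat_r; [apply Rinv_0_lt_compat; lra| lra].
    + unfold Rdiv. apply Rle_trans with ((IZR k + a) * / 3 ^ m + 1 * / 3^m).
      * rewrite <- Rmult_plus_distr_r. apply Rmult_le_compat_r; [left; apply Rinv_0_lt_compat; lra| lra].
      * assert (/ 3 ^ m <= 1). { rewrite <- Rinv_1. apply Rinv_le_contravar; [lra|].
          clear -m. induction m; simpl; lra. } lra.
  - exists m, a, b. split; [exact Ht|]. split; [|split].
    + intros x hx. destruct (F x hx) as [-> h]. lra.
    + intros x y hx hy e. destruct (F x hx) as [ex _]. destruct (F y hy) as [ey _].
      rewrite ex, ey in e. apply Rmult_eq_reg_l with (3^m); lra.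
    + intros y hy. exists ((y + IZR k) / 3 ^ m).
      assert (hx : (IZR k + a) / 3 ^ m < (y + IZR k) / 3 ^ m < (IZR k + b) / 3 ^ m).
      { split; apply Rmult_lt_compat_r; try (apply Rinv_0_lt_compat; lra); lra. }
      split; [exact hx|]. destruct (F _ hx) as [-> _]. field. lra.
Qed.

Lemma col (r : Z) (N : nat) (P : Z) : (1 <= N)%nat -> (r = 1 \/ r = 2)%Z ->
  (P mod 3 = r)%Z -> triadic_with_residue r (IZR P / 3 ^ N).
Proof.
  intros HN Hr HP. set (B := (3 ^ Z.of_nat N)%Z).
  assert (EB : B = (3 * 3 ^ Z.of_nat (N - 1))%Z).
  { unfold B. replace (Z.of_nat N) with (Z.succ (Z.of_nat (N-1))) by lia.
    apply Z.pow_succ_r. lia. }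
  assert (Bp : (0 < B)%Z) by (unfold B; apply Z.pow_pos_nonneg; lia).
  pose proof (Z.div_mod P B ltac:(lia)) as D.
  pose proof (Z.mod_pos_bound P B Bp) as Bd.
  set (p := (P mod B)%Z) in *. set (q := (P / B)%Z) in *.
  assert (pm : (p mod 3 = r)%Z).
  { rewrite <- HP. rewrite D. rewrite EB.
    replace (3 * 3 ^ Z.of_nat (N - 1) * q + p)%Z with (p + (3 ^ Z.of_nat (N - 1) * q) * 3)%Z by ring.
    rewrite Z.mod_add by lia. reflexivity. }
  exists N, p, q. split; [exact HN|]. split; [|split; [|split]].
  - split; [|lia]. destruct (Z.eq_dec p 0) as [e|e]. { rewrite e in pm. rewrite Zmod_0_l in pm. lia. } lia.
  - intros [c hc]. rewrite hc, Z.mod_mul in pm by lia. lia.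
  - exact pm.
  - rewrite D at 1. rewrite plus_IZR, mult_IZR. unfold B. rewrite <- pow_IZR.
    field. apply pow_nonzero. lra.
Qed.


Lemma Rform (s t : R) : Rinterval s t -> exists n k a b, target_arc a b /\
  s = (IZR k + a) / 3 ^ n /\ t = (IZR k + b) / 3 ^ n.
Proof.
  intros [[hst _] [n [a [b [Ht [HA [_ HB]]]]]]].
  pose proof (pow3_pos n) as P.
  assert (Hab : 0 <= a /\ a < b /\ b <= 1) by (destruct Ht as [[-> ->]|[[-> ->]|[-> ->]]]; lra).
  set (u := 3^n * s). set (v := 3^n * t).
  assert (huv : u < v) by (unfold u, v; apply Rmult_lt_compat_l; lra).
  assert (A : forall w, u < w < v -> a < frac_part w < b).
  { intros w hw. assert (e : 3^n * (w / 3^n) = w) by (field; lra).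
    assert (hx : s < w / 3^n < t).
    { unfold u, v in hw. split.
      - apply Rmult_lt_reg_l with (3^n); lra.
      - apply Rmult_lt_reg_l with (3^n); lra. }
    pose proof (HA _ hx) as h. unfold sigma3_iter in h. rewrite e in h. exact h. }
  assert (B : forall y, a < y < b -> exists w, u < w < v /\ frac_part w = y).
  { intros y hy. destruct (HB y hy) as [x [hx ex]]. exists (3^n * x).
    split; [|exact ex]. unfold u, v. split; apply Rmult_lt_compat_l; lra. }
  assert (noint : forall z : Z, ~ (u < IZR z < v)).
  { intros z hz. pose proof (A _ hz) as h. rewrite (frac_eq z) in h by lra. lra. }
  set (k := Int_part ((u + v) / 2)).
  pose proof (base_Int_part ((u+v)/2)) as [b1 b2]. fold k in b1, b2.
  assert (fr : forall w, u < w < v -> frac_part w = w - IZR k).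
  { intros w hw. apply frac_eq. split.
    - destruct (Rle_lt_dec (IZR k) w) as [h|h]; [exact h|].
      exfalso; apply (noint k); lra.
    - destruct (Rlt_le_dec w (IZR k + 1)) as [h|h]; [exact h|].
      exfalso; apply (noint (k+1)%Z); rewrite plus_IZR; lra. }
  assert (Eu : u = IZR k + a).
  { destruct (Rtotal_order u (IZR k + a)) as [h|[h|h]]; [exfalso| exact h| exfalso].
    - destruct (Rle_lt_dec v (IZR k + a)) as [h2|h2].
      + pose proof (A ((u+v)/2) ltac:(lra)) as h3. rewrite fr in h3 by lra. lra.
      + pose proof (A ((u+(IZR k + a))/2) ltac:(lra)) as h3. rewrite fr in h3 by lra. lra.
    - destruct (Rle_lt_dec (u - IZR k) b) as [h2|h2].
      + destruct (B ((a + (u - IZR k))/2) ltac:(lra)) as [w [hw ew]]. rewrite fr in ew by lra. lra.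
      + destruct (B ((a + b)/2) ltac:(lra)) as [w [hw ew]]. rewrite fr in ew by lra. lra. }
  assert (Ev : v = IZR k + b).
  { destruct (Rtotal_order v (IZR k + b)) as [h|[h|h]]; [exfalso| exact h| exfalso].
    - destruct (Rle_lt_dec a (v - IZR k)) as [h2|h2].
      + destruct (B (((v - IZR k) + b)/2) ltac:(lra)) as [w [hw ew]]. rewrite fr in ew by lra. lra.
      + destruct (B ((a + b)/2) ltac:(lra)) as [w [hw ew]]. rewrite fr in ew by lra. lra.
    - destruct (Rle_lt_dec (IZR k + b) u) as [h2|h2].
      + pose proof (A ((u+v)/2) ltac:(lra)) as h3. rewrite fr in h3 by lra. lra.
      + pose proof (A (((IZR k + b) + v)/2) ltac:(lra)) as h3. rewrite fr in h3 by lra. lra. }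
  exists n, k, a, b. split; [exact Ht|]. unfold u, v in Eu, Ev. split.
  - rewrite <- Eu. field. lra.
  - rewrite <- Ev. field. lra.
Qed.

Lemma RI' (m : nat) (K : Z) (a b s t : R) : target_arc a b ->
  s = (IZR K + a) / 3 ^ m -> t = (IZR K + b) / 3 ^ m -> Rinterval s t.
Proof. intros H -> ->. apply RI; exact H. Qed.

Lemma ltc (n : nat) (K : Z) (c d : R) : c < d -> (IZR K + c) / 3 ^ n < (IZR K + d) / 3 ^ n.
Proof. intros h. unfold Rdiv. apply Rmult_lt_compat_r; [apply Rinv_0_lt_compat, pow3_pos| lra]. Qed.

Lemma zm (j r : Z) : (0 <= r < 3)%Z -> ((3 * j + r) mod 3 = r)%Z.
Proof. intros h. rewrite Z.add_comm, Z.mul_comm, Z.mod_add by lia. apply Z.mod_small; exact h. Qed.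

Ltac eqr n := repeat (first [rewrite plus_IZR | rewrite mult_IZR]); rewrite <- ?tech_pow_Rmult;
  pose proof (pow3_pos n); field; lra.
Ltac tgt := unfold target_arc; lra.

Theorem lemmaB8 (s t : R) (c1 c2 : color) :
  Rinterval s t ->
  ((c1 = Blue /\ c2 = Red) \/ (c1 = Red /\ c2 = Blue)) ->
  exists x1 x2 : R,
    s < x1 < t /\ x1 < x2 < t /\
    Rinterval s x1 /\ Rinterval x1 x2 /\ Rinterval x2 t /\
    has_color c1 x1 /\ has_color c2 x2.
Proof.
  intros HR Hc. destruct (Rform _ _ HR) as [n [k [a [b [Ht [-> ->]]]]]].
  destruct Ht as [[-> ->]|[[-> ->]|[-> ->]]]; destruct Hc as [[-> ->]|[-> ->]].
  -
    exists ((IZR k + 2/9) / 3 ^ n), ((IZR k + 1/3) / 3 ^ n).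
    split; [split; apply ltc; lra|]. split; [split; apply ltc; lra|].
    split; [apply (RI' (S n) (3*k)%Z 0 (2/3)); [tgt|eqr n|eqr n]|].
    split; [apply (RI' (S (S n)) (9*k+2)%Z 0 1); [tgt|eqr n|eqr n]|].
    split; [apply (RI' (n) (k)%Z (1/3) 1); [tgt|eqr n|eqr n]|].
    split; [(simpl; right; replace ((IZR k + 2/9) / 3 ^ n) with (IZR (3 * (3*k) + 2)%Z / 3 ^ (S (S n))) by eqr n; apply col; [lia|lia|apply zm; lia])|].
    (replace ((IZR k + 1/3) / 3 ^ n) with (IZR (3 * (k) + 1)%Z / 3 ^ (S n)) by eqr n; apply col; [lia|lia|apply zm; lia]).
  -
    exists ((IZR k + 1/3) / 3 ^ n), ((IZR k + 2/3) / 3 ^ n).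
    split; [split; apply ltc; lra|]. split; [split; apply ltc; lra|].
    split; [apply (RI' (S n) (3*k)%Z 0 1); [tgt|eqr n|eqr n]|].
    split; [apply (RI' (S n) (3*k+1)%Z 0 1); [tgt|eqr n|eqr n]|].
    split; [apply (RI' (S n) (3*k+2)%Z 0 1); [tgt|eqr n|eqr n]|].
    split; [(replace ((IZR k + 1/3) / 3 ^ n) with (IZR (3 * (k) + 1)%Z / 3 ^ (S n)) by eqr n; apply col; [lia|lia|apply zm; lia])|].
    (simpl; right; replace ((IZR k + 2/3) / 3 ^ n) with (IZR (3 * (k) + 2)%Z / 3 ^ (S n)) by eqr n; apply col; [lia|lia|apply zm; lia]).
  -
    exists ((IZR k + 2/9) / 3 ^ n), ((IZR k + 1/3) / 3 ^ n).
    split; [split; apply ltc; lra|]. split; [split; apply ltc; lra|].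
    split; [apply (RI' (S n) (3*k)%Z 0 (2/3)); [tgt|eqr n|eqr n]|].
    split; [apply (RI' (S (S n)) (9*k+2)%Z 0 1); [tgt|eqr n|eqr n]|].
    split; [apply (RI' (S n) (3*k+1)%Z 0 1); [tgt|eqr n|eqr n]|].
    split; [(simpl; right; replace ((IZR k + 2/9) / 3 ^ n) with (IZR (3 * (3*k) + 2)%Z / 3 ^ (S (S n))) by eqr n; apply col; [lia|lia|apply zm; lia])|].
    (replace ((IZR k + 1/3) / 3 ^ n) with (IZR (3 * (k) + 1)%Z / 3 ^ (S n)) by eqr n; apply col; [lia|lia|apply zm; lia]).
  -
    exists ((IZR k + 1/3) / 3 ^ n), ((IZR k + 5/9) / 3 ^ n).
    split; [split; apply ltc; lra|]. split; [split; apply ltc; lra|].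
    split; [apply (RI' (S n) (3*k)%Z 0 1); [tgt|eqr n|eqr n]|].
    split; [apply (RI' (S n) (3*k+1)%Z 0 (2/3)); [tgt|eqr n|eqr n]|].
    split; [apply (RI' (S (S n)) (9*k+5)%Z 0 1); [tgt|eqr n|eqr n]|].
    split; [(replace ((IZR k + 1/3) / 3 ^ n) with (IZR (3 * (k) + 1)%Z / 3 ^ (S n)) by eqr n; apply col; [lia|lia|apply zm; lia])|].
    (simpl; right; replace ((IZR k + 5/9) / 3 ^ n) with (IZR (3 * (3*k+1) + 2)%Z / 3 ^ (S (S n))) by eqr n; apply col; [lia|lia|apply zm; lia]).
  -
    exists ((IZR k + 2/3) / 3 ^ n), ((IZR k + 7/9) / 3 ^ n).
    split; [split; apply ltc; lra|]. split; [split; apply ltc; lra|].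
    split; [apply (RI' (S n) (3*k+1)%Z 0 1); [tgt|eqr n|eqr n]|].
    split; [apply (RI' (S (S n)) (9*k+6)%Z 0 1); [tgt|eqr n|eqr n]|].
    split; [apply (RI' (S n) (3*k+2)%Z (1/3) 1); [tgt|eqr n|eqr n]|].
    split; [(simpl; right; replace ((IZR k + 2/3) / 3 ^ n) with (IZR (3 * (k) + 2)%Z / 3 ^ (S n)) by eqr n; apply col; [lia|lia|apply zm; lia])|].
    (replace ((IZR k + 7/9) / 3 ^ n) with (IZR (3 * (3*k+2) + 1)%Z / 3 ^ (S (S n))) by eqr n; apply col; [lia|lia|apply zm; lia]).
  -
    exists ((IZR k + 4/9) / 3 ^ n), ((IZR k + 2/3) / 3 ^ n).
    split; [split; apply ltc; lra|]. split; [split; apply ltc; lra|].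
    split; [apply (RI' (S (S n)) (9*k+3)%Z 0 1); [tgt|eqr n|eqr n]|].
    split; [apply (RI' (S n) (3*k+1)%Z (1/3) 1); [tgt|eqr n|eqr n]|].
    split; [apply (RI' (S n) (3*k+2)%Z 0 1); [tgt|eqr n|eqr n]|].
    split; [(replace ((IZR k + 4/9) / 3 ^ n) with (IZR (3 * (3*k+1) + 1)%Z / 3 ^ (S (S n))) by eqr n; apply col; [lia|lia|apply zm; lia])|].
    (simpl; right; replace ((IZR k + 2/3) / 3 ^ n) with (IZR (3 * (k) + 2)%Z / 3 ^ (S n)) by eqr n; apply col; [lia|lia|apply zm; lia]).
Qed.
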